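(* Let $\varepsilon\ge0$ and $m,M\in(0,1)$ with $m\le M$. Define $L_1,L_2\colon[0,1]\to\mathbb{R}^+$ by \[ L_1(p)=\big(e^{\varepsilon}-(e^{\varepsilon}-1)(pM+(1-p)m)\big)\exp\Big(p\tfrac{M}{m}+(1-p)\tfrac{1-m}{1-(pM+(1-p)m)}-1\Big), \] \[ L_2(p)=\Big(e^{\varepsilon}-(e^{\varepsilon}-1)\Big(pM+(1-p)\tfrac{(M+m)-pM}{2-p}\Big)\Big)\exp\Big(p\tfrac{M}{m}+(1-p)\tfrac{1-\frac{(M+m)-pM}{2-p}}{1-M}-1\Big), \] and $l_1=\ln\circ L_1$, $l_2=\ln\circ L_2$. Then: (i) If $\varepsilon\ne0$ and $m\ne M$, $L_1$ and $l_1$ attain their maximum over $[0,1]$ at $p_1=\min\{1,\max\{V_1,0\}\}$, where \[ V_1=\begin{cases}-\frac{1}{3a_1}\Big(b_1+\sqrt[3]{\tfrac{D_{1,1}+\sqrt{D_{1,1}^2-4D_{1,0}^3}}{2}}+\sqrt[3]{\tfrac{D_{1,1}-\sqrt{D_{1,1}^2-4D_{1,0}^3}}{2}}\Big)&\text{if }D_{1,1}^2-4D_{1,0}^3>0,\\[2mm] -\frac{1}{3a_1}\Big(b_1+2\sqrt{D_{1,0}}\cos\big(\tfrac13\arccos\big(\tfrac{D_{1,1}}{2R_1}\big)\big)\Big)&\text{if }D_{1,1}^2-4D_{1,0}^3\le0,\end{cases} \] with $a_1=(e^{\varepsilon}-1)\frac{M}{m}(M-m)^2$, $b_1=-\frac{M-m}{m}\big((m^2-4Mm+2M)(e^{\varepsilon}-1)+e^{\varepsilon}M\big)$,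 $c_1=\frac{1-m}{m}\big((e^{\varepsilon}-1)(2m^2-4Mm-m)+(3e^{\varepsilon}-1)M\big)$, $d_1=-(1-m)\big((e^{\varepsilon}-1)(m-2)+\frac{e^{\varepsilon}}{m}\big)$, $D_{1,0}=b_1^2-3a_1c_1$, $D_{1,1}=2b_1^3-9a_1b_1c_1+27a_1^2d_1$, $R_1=\sqrt{D_{1,0}^3}$; and $L_2$ and $l_2$ attain their maximum over $[0,1]$ at $p_2=\min\{1,\max\{V_2,0\}\}$, where \[ V_2=-\frac{1}{3a_2}\Big(b_2+2\sqrt{D_{2,0}}\cos\Big(\tfrac13\arccos\Big(\tfrac{D_{2,1}}{2R_2}\Big)\Big)\Big) \] with $a_2=\frac{e^{\varepsilon}-(e^{\varepsilon}-1)m}{m}$, $b_2=-\frac{6e^{\varepsilon}-(e^{\varepsilon}-1)(M+5m)}{m}$, $c_2=\frac{1}{(1-M)m}\big(m((e^{\varepsilon}-1)(m+9M-9)-e^{\varepsilon})+4M((e^{\varepsilon}-1)M-4e^{\varepsilon}+1)+12e^{\varepsilon}\big)$, $d_2=-(2e^{\varepsilon}-(e^{\varepsilon}-1)(M+m))\frac{4-4M-m}{(1-M)m}+2(e^{\varepsilon}-1)$, $D_{2,0}=b_2^2-3a_2c_2$, $D_{2,1}=2b_2^3-9a_2b_2c_2+27a_2^2d_2$, $R_2=\sqrt{D_{2,0}^3}$. (ii) If $\varepsilon=0$ and $m\ne M$, $L_1$ and $l_1$ attain their maximum over $[0,1]$ at $p_1=\min\{1,\max\{V_1,0\}\}$ with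 $V_1=\frac{1-m}{M-m}-\frac{\sqrt{Mm(1-m)(1-M)}}{M(M-m)}$, and $L_2$ and $l_2$ attain their maximum over $[0,1]$ at $p_2=\min\{1,\max\{V_2,0\}\}$ with $V_2=2-\frac{\sqrt{m(1-M)}}{1-M}$. (iii) If $m=M$, $L_1$ and $L_2$ are constantly equal to $e^{\varepsilon}-(e^{\varepsilon}-1)m$.
   Context: Cube roots $\sqrt[3]{\cdot}$ of real numbers denote the real cube root. *)

(* Defs.v *)
From Stdlib Require Import Reals.
Open Scope R_scope.

Definition cbrt (x : R) : R :=
  if Rlt_dec 0 x then Rpower x (1/3)
  else if Rlt_dec x 0 then - Rpower (- x) (1/3) else 0.

Section S.
Variables (eps m M : R).
Let E := exp eps.

Definition L1 (p : R) : R :=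
  let q := p * M + (1 - p) * m in
  (E - (E - 1) * q) * exp (p * (M / m) + (1 - p) * ((1 - m) / (1 - q)) - 1).

Definition L2 (p : R) : R :=
  let r := ((M + m) - p * M) / (2 - p) in
  (E - (E - 1) * (p * M + (1 - p) * r))
    * exp (p * (M / m) + (1 - p) * ((1 - r) / (1 - M)) - 1).

Definition l1 (p : R) : R := ln (L1 p).
Definition l2 (p : R) : R := ln (L2 p).

Definition a1 := (E - 1) * (M / m) * (M - m) ^ 2.
Definition b1 := - ((M - m) / m) * ((m ^ 2 - 4 * M * m + 2 * M) * (E - 1) + E * M).
Definition c1 := ((1 - m) / m) * ((E - 1) * (2 * m ^ 2 - 4 * M * m - m) + (3 * E - 1) * M).
Definition d1 := - (1 - m) * ((E - 1) * (m - 2) + E / m).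
Definition D10 := b1 ^ 2 - 3 * a1 * c1.
Definition D11 := 2 * b1 ^ 3 - 9 * a1 * b1 * c1 + 27 * a1 ^ 2 * d1.
Definition R1 := sqrt (D10 ^ 3).
Definition V1 : R :=
  if Rlt_dec 0 (D11 ^ 2 - 4 * D10 ^ 3) then
    - (1 / (3 * a1)) * (b1 + cbrt ((D11 + sqrt (D11 ^ 2 - 4 * D10 ^ 3)) / 2)
                          + cbrt ((D11 - sqrt (D11 ^ 2 - 4 * D10 ^ 3)) / 2))
  else
    - (1 / (3 * a1)) * (b1 + 2 * sqrt D10 * cos (1/3 * acos (D11 / (2 * R1)))).

Definition a2 := (E - (E - 1) * m) / m.
Definition b2 := - ((6 * E - (E - 1) * (M + 5 * m)) / m).
Definition c2 := (1 / ((1 - M) * m)) *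
  (m * ((E - 1) * (m + 9 * M - 9) - E) + 4 * M * ((E - 1) * M - 4 * E + 1) + 12 * E).
Definition d2 := - (2 * E - (E - 1) * (M + m)) * ((4 - 4 * M - m) / ((1 - M) * m))
                 + 2 * (E - 1).
Definition D20 := b2 ^ 2 - 3 * a2 * c2.
Definition D21 := 2 * b2 ^ 3 - 9 * a2 * b2 * c2 + 27 * a2 ^ 2 * d2.
Definition R2 := sqrt (D20 ^ 3).
Definition V2 : R :=
  - (1 / (3 * a2)) * (b2 + 2 * sqrt D20 * cos (1/3 * acos (D21 / (2 * R2)))).

Definition V1_0 : R :=
  (1 - m) / (M - m) - sqrt (M * m * (1 - m) * (1 - M)) / (M * (M - m)).
Definition V2_0 : R := 2 - sqrt (m * (1 - M)) / (1 - M).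
End S.

Definition clamp01 (v : R) : R := Rmin 1 (Rmax v 0).

Definition is_max_on_01 (f : R -> R) (p : R) : Prop :=
  0 <= p <= 1 /\ forall q, 0 <= q <= 1 -> f q <= f p.

(* Main.v *)
From Stdlib Require Import Reals Lra Psatz.
Require Import Defs.
From Coquelicot Require Import Coquelicot.
Open Scope R_scope.

Lemma cbrt_cube x : cbrt x ^ 3 = x.
Proof.
  unfold cbrt. destruct (Rlt_dec 0 x).
  - assert (H: Rpower x (1/3) ^ 3 = Rpower x (1/3 * 3)).
    { rewrite <- Rpower_pow by (unfold Rpower; apply exp_pos).
      rewrite Rpower_mult. f_equal. simpl INR. ring. }
    rewrite H. replace (1/3*3) with 1 by field. apply Rpower_1; auto.
  - destruct (Rlt_dec x 0).
    + assert (H: Rpower (-x) (1/3) ^ 3 = Rpower (-x) (1/3 * 3)).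
      { rewrite <- Rpower_pow by (unfold Rpower; apply exp_pos).
        rewrite Rpower_mult. f_equal. simpl INR. ring. }
      replace ((- Rpower (- x) (1 / 3)) ^ 3) with (- (Rpower (-x) (1/3) ^ 3)) by ring.
      rewrite H. replace (1/3*3) with 1 by field. rewrite Rpower_1; lra.
    + simpl. lra.
Qed.

Lemma cos3 x : cos (3 * x) = 4 * cos x ^ 3 - 3 * cos x.
Proof.
  replace (3 * x) with (2 * x + x) by ring.
  rewrite cos_plus, cos_2a_cos, sin_2a.
  pose proof (sin2 x) as H. unfold Rsqr in H.
  replace (2 * sin x * cos x * sin x) with (2 * (sin x * sin x) * cos x) by ring.
  rewrite H. ring.
Qed.

Lemma cube_lt x y : x < y -> x ^ 3 < y ^ 3.
Proof.
  intro h. assert (0 < x^2 + x*y + y^2).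
  { assert (0 < (x - y)^2) by (assert (x - y <> 0) by lra; nra). nra. }
  assert (y^3 - x^3 = (y - x) * (x^2 + x*y + y^2)) by ring. nra.
Qed.

Definition gdep (D0 D1 t : R) := t ^ 3 - 3 * D0 * t - D1.

Lemma cardano_root D0 D1 :
  0 < D1 ^ 2 - 4 * D0 ^ 3 ->
  let t0 := cbrt ((D1 + sqrt (D1 ^ 2 - 4 * D0 ^ 3)) / 2)
          + cbrt ((D1 - sqrt (D1 ^ 2 - 4 * D0 ^ 3)) / 2) in
  gdep D0 D1 t0 = 0 /\ forall t, t0 < t -> 0 < gdep D0 D1 t.
Proof.
  intros HD t0.
  set (S := sqrt (D1 ^ 2 - 4 * D0 ^ 3)).
  assert (HS : S * S = D1 ^ 2 - 4 * D0 ^ 3) by (apply sqrt_sqrt; lra).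
  assert (HSp : 0 < S) by (apply sqrt_lt_R0; lra).
  set (u := cbrt ((D1 + S) / 2)). set (v := cbrt ((D1 - S) / 2)).
  assert (Hu : u ^ 3 = (D1 + S) / 2) by apply cbrt_cube.
  assert (Hv : v ^ 3 = (D1 - S) / 2) by apply cbrt_cube.
  assert (Huv3 : (u * v) ^ 3 = D0 ^ 3).
  { rewrite Rpow_mult_distr, Hu, Hv.
    replace ((D1 + S) / 2 * ((D1 - S) / 2)) with ((D1^2 - S*S)/4) by field.
    rewrite HS. field. }
  assert (Huv : u * v = D0).
  { destruct (Rtotal_order (u * v) D0) as [h|[h|h]]; auto.
    - exfalso. apply cube_lt in h. lra.
    - exfalso. apply cube_lt in h. lra. }
  assert (Huv_ne : u <> v).
  { intro e. assert (u^3 = v^3) by (rewrite e; auto). lra. }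
  assert (Hg0 : gdep D0 D1 t0 = 0).
  { unfold gdep, t0. fold S u v. rewrite <- Huv.
    replace ((u + v) ^ 3 - 3 * (u * v) * (u + v) - D1) with (u^3 + v^3 - D1) by ring.
    rewrite Hu, Hv. field. }
  split; auto.
  intros t Ht.
  assert (E : gdep D0 D1 t = (t - t0) * ((t + t0/2)^2 + 3/4 * (u - v)^2)).
  { replace (gdep D0 D1 t) with (gdep D0 D1 t - gdep D0 D1 t0) by (rewrite Hg0; ring).
    unfold gdep, t0. fold S u v. rewrite <- Huv. field. }
  rewrite E. apply Rmult_lt_0_compat; [lra|].
  assert (0 < (u - v)^2).
  { assert (u - v <> 0) by lra. rewrite <- Rsqr_pow2. apply Rsqr_pos_lt. auto. }
  assert (0 <= (t + t0/2)^2) by apply pow2_ge_0. lra.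
Qed.

Lemma trig_root D0 D1 :
  D1 ^ 2 - 4 * D0 ^ 3 <= 0 ->
  let t0 := 2 * sqrt D0 * cos (1/3 * acos (D1 / (2 * sqrt (D0 ^ 3)))) in
  gdep D0 D1 t0 = 0 /\ forall t, t0 < t -> 0 < gdep D0 D1 t.
Proof.
  intros HD t0.
  assert (HD0 : 0 <= D0).
  { destruct (Rle_lt_dec 0 D0); auto.
    assert (0 <= D1^2) by apply pow2_ge_0.
    assert (0 < (-D0)^3) by (apply pow_lt; lra).
    assert ((-D0)^3 = - D0^3) by ring. lra. }
  set (r := sqrt D0).
  assert (Hr0 : 0 <= r) by apply sqrt_pos.
  assert (Hrr : r * r = D0) by (apply sqrt_sqrt; auto).
  assert (HR : sqrt (D0 ^ 3) = r ^ 3).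
  { replace (D0 ^ 3) with ((r^3)^2) by (rewrite <- Hrr; ring).
    apply sqrt_pow2. apply pow_le; auto. }
  set (x := D1 / (2 * sqrt (D0 ^ 3))).
  set (phi := 1/3 * acos x).
  assert (Hx : D1 = 2 * r^3 * x /\ -1 <= x <= 1).
  { unfold x. rewrite HR. destruct (Req_dec r 0) as [e|ne].
    - rewrite e in *. assert (D1 = 0).
      { assert (D0 = 0) by lra. subst D0. assert (D1^2 <= 0) by lra.
        destruct (Req_dec D1 0); auto. assert (0 < D1^2) by (rewrite <- Rsqr_pow2; apply Rsqr_pos_lt; auto); lra. }
      subst D1. split; [ring|]. replace (0 / (2 * 0^3)) with 0 by (unfold Rdiv; ring). lra.
    - assert (0 < r) by lra. assert (0 < r^3) by (apply pow_lt; auto).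
      split. { field. lra. }
      assert ((D1 / (2 * r^3))^2 <= 1).
      { replace ((D1 / (2 * r^3))^2) with (D1^2 / (4 * (r^3)^2)) by (field; lra).
        apply Rmult_le_reg_r with (4 * (r^3)^2). nra.
        replace (D1 ^ 2 / (4 * (r ^ 3) ^ 2) * (4 * (r ^ 3) ^ 2)) with (D1^2) by (field; lra).
        replace ((r^3)^2) with (D0^3) by (rewrite <- Hrr; ring). lra. }
      nra. }
  destruct Hx as [HD1 Hx].
  assert (Hc3 : 4 * cos phi ^ 3 - 3 * cos phi = x).
  { rewrite <- cos3. unfold phi. replace (3 * (1/3 * acos x)) with (acos x) by field.
    apply cos_acos; auto. }
  assert (Hc : 1/2 <= cos phi).
  { pose proof (acos_bound x). pose proof PI_RGT_0.
    rewrite <- cos_PI3. unfold phi.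
    destruct (Req_dec (1/3 * acos x) (PI/3)) as [e|ne]; [rewrite e; lra|].
    left. apply cos_decreasing_1; lra. }
  assert (Ht0 : t0 = 2 * r * cos phi) by reflexivity.
  assert (Hg0 : gdep D0 D1 t0 = 0).
  { unfold gdep. rewrite Ht0, HD1, <- Hrr, <- Hc3. ring. }
  split; auto.
  intros t Ht.
  assert (E : gdep D0 D1 t = (t - t0) * (t^2 + t * t0 + t0^2 - 3 * r^2)).
  { replace (gdep D0 D1 t) with (gdep D0 D1 t - gdep D0 D1 t0) by (rewrite Hg0; ring).
    unfold gdep. rewrite <- Hrr. ring. }
  rewrite E. apply Rmult_lt_0_compat; [lra|].
  assert (r <= t0) by (rewrite Ht0; nra).
  nra.
Qed.

Lemma gdep_diff D0 D1 y z :
  gdep D0 D1 z - gdep D0 D1 y = (z - y) * (z^2 + z*y + y^2 - 3 * D0).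
Proof. unfold gdep. ring. Qed.

Lemma disc_neg D0 D1 y2 y3 :
  y2 < y3 -> 0 < gdep D0 D1 y2 -> gdep D0 D1 y3 < 0 -> D1 ^ 2 - 4 * D0 ^ 3 < 0.
Proof.
  intros H12 H2 H3.
  pose proof (gdep_diff D0 D1 y2 y3) as Hd.
  assert (HD0 : 0 < D0).
  { destruct (Rle_lt_dec D0 0); auto.
    assert (0 <= y3^2 + y3*y2 + y2^2) by nra. nra. }
  set (r := sqrt D0).
  assert (Hr0 : 0 < r) by (apply sqrt_lt_R0; auto).
  assert (Hrr : r * r = D0) by (apply sqrt_sqrt; lra).
  assert (Hm : 0 < gdep D0 D1 (-r)).
  { destruct (Rle_lt_dec y2 (2*r)).
    - assert (gdep D0 D1 (-r) - gdep D0 D1 y2 = - (y2 + r)^2 * (y2 - 2*r))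
        by (unfold gdep; rewrite <- Hrr; ring).
      assert (0 <= (y2 + r)^2) by apply pow2_ge_0. nra.
    - exfalso. assert (y3^2 + y3*y2 + y2^2 - 3*D0 > 0) by nra. nra. }
  assert (Hn : gdep D0 D1 r < 0).
  { destruct (Rle_lt_dec (-2*r) y3).
    - assert (gdep D0 D1 r - gdep D0 D1 y3 = - (y3 - r)^2 * (y3 + 2*r))
        by (unfold gdep; rewrite <- Hrr; ring).
      assert (0 <= (y3 - r)^2) by apply pow2_ge_0. nra.
    - exfalso. assert (y3^2 + y3*y2 + y2^2 - 3*D0 > 0) by nra. nra. }
  unfold gdep in Hm, Hn. rewrite <- Hrr in *.
  assert (D1 < 2 * r^3) by nra. assert (-2*r^3 < D1) by nra.
  assert (0 < r^3) by (apply pow_lt; auto).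
  replace (D1^2 - 4 * (r*r)^3) with ((D1 - 2*r^3)*(D1 + 2*r^3)) by ring. nra.
Qed.

Definition Pc (a b c d x : R) := a * x ^ 3 + b * x ^ 2 + c * x + d.

Lemma cubic_shift a b c d t : a <> 0 ->
  Pc a b c d (-(b + t) / (3 * a)) =
  - gdep (b ^ 2 - 3 * a * c) (2 * b ^ 3 - 9 * a * b * c + 27 * a ^ 2 * d) t / (27 * a ^ 2).
Proof. intro. unfold Pc, gdep. field. auto. Qed.

Lemma cubic_shift' a b c d x : a <> 0 ->
  Pc a b c d x =
  - gdep (b ^ 2 - 3 * a * c) (2 * b ^ 3 - 9 * a * b * c + 27 * a ^ 2 * d) (-(3 * a * x + b)) / (27 * a ^ 2).
Proof.
  intro. rewrite <- cubic_shift by auto. f_equal. field. auto.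
Qed.

Lemma cubic_smallest a b c d t0 : 0 < a ->
  gdep (b ^ 2 - 3 * a * c) (2 * b ^ 3 - 9 * a * b * c + 27 * a ^ 2 * d) t0 = 0 ->
  (forall t, t0 < t -> 0 < gdep (b ^ 2 - 3 * a * c) (2 * b ^ 3 - 9 * a * b * c + 27 * a ^ 2 * d) t) ->
  Pc a b c d (- (1 / (3 * a)) * (b + t0)) = 0 /\
  forall x, x < - (1 / (3 * a)) * (b + t0) -> Pc a b c d x < 0.
Proof.
  intros Ha H0 Hp. split.
  - rewrite cubic_shift' by lra.
    replace (- (3 * a * (- (1 / (3 * a)) * (b + t0)) + b)) with t0 by (field; lra).
    rewrite H0. field. lra.
  - intros x Hx. rewrite cubic_shift' by lra.
    assert (t0 < - (3 * a * x + b)).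
    { apply Rmult_lt_compat_l with (r := 3 * a) in Hx; [|lra].
      replace (3 * a * (- (1 / (3 * a)) * (b + t0))) with (-(b + t0)) in Hx by (field; lra). lra. }
    specialize (Hp _ H).
    assert (0 < 27 * a ^ 2) by (assert (0 < a^2) by (apply pow_lt; lra); lra).
    assert (0 < / (27 * a ^ 2)) by (apply Rinv_0_lt_compat; lra). unfold Rdiv. nra.
Qed.

Lemma cubic_disc_neg a b c d x2 x3 : 0 < a -> x2 < x3 ->
  0 < Pc a b c d x2 -> Pc a b c d x3 < 0 ->
  (2 * b ^ 3 - 9 * a * b * c + 27 * a ^ 2 * d) ^ 2 - 4 * (b ^ 2 - 3 * a * c) ^ 3 < 0.
Proof.
  intros Ha H23 H2 H3.
  rewrite cubic_shift' in H2, H3 by lra.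
  assert (0 < / (27 * a ^ 2)) by (apply Rinv_0_lt_compat; assert (0 < a^2) by (apply pow_lt; lra); lra).
  unfold Rdiv in H2, H3.
  apply disc_neg with (y2 := -(3 * a * x3 + b)) (y3 := -(3 * a * x2 + b)); nra.
Qed.
Lemma max_crit (F F' : R -> R) (V : R) :
  (forall x, 0 <= x <= 1 -> derivable_pt_lim F x (F' x)) ->
  (forall x, 0 <= x <= 1 -> x < V -> 0 < F' x) ->
  (forall x, 0 <= x <= 1 -> V < x -> F' x < 0) ->
  is_max_on_01 F (clamp01 V).
Proof.
  intros Hd Hpos Hneg.
  assert (Hp : 0 <= clamp01 V <= 1).
  { unfold clamp01, Rmin, Rmax. destruct (Rle_dec V 0); destruct (Rle_dec 1 _); lra. }
  split; auto. intros q Hq.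
  set (p := clamp01 V) in *.
  destruct (Rtotal_order q p) as [h|[h|h]].
  - destruct (MVT_cor2 F F' q p h) as [c [Hc1 Hc2]].
    { intros; apply Hd; lra. }
    assert (c < V).
    { unfold p, clamp01, Rmin, Rmax in *. destruct (Rle_dec V 0); destruct (Rle_dec 1 _); lra. }
    assert (0 < F' c) by (apply Hpos; lra). nra.
  - subst; lra.
  - destruct (MVT_cor2 F F' p q h) as [c [Hc1 Hc2]].
    { intros; apply Hd; lra. }
    assert (V < c).
    { unfold p, clamp01, Rmin, Rmax in *. destruct (Rle_dec V 0); destruct (Rle_dec 1 _); lra. }
    assert (F' c < 0) by (apply Hneg; lra). nra.
Qed.

Lemma max_transfer (F G : R -> R) p :
  is_max_on_01 F p -> (forall x, 0 <= x <= 1 -> G x = F x) -> is_max_on_01 G p.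
Proof.
  intros [Hp H] HG. split; auto. intros q Hq. rewrite !HG; auto.
Qed.

Lemma max_transfer_exp (F G : R -> R) p :
  is_max_on_01 F p -> (forall x, 0 <= x <= 1 -> G x = exp (F x)) -> is_max_on_01 G p.
Proof.
  intros [Hp H] HG. split; auto. intros q Hq. rewrite !HG; auto.
  destruct (H q Hq); [left; apply exp_increasing; auto | rewrite H0; lra].
Qed.
Definition F1' eps m M p :=
  M / m - (exp eps - 1) * (M - m) / (exp eps - (exp eps - 1) * (p * M + (1 - p) * m))
  - (1 - m) * (1 - M) / (1 - (p * M + (1 - p) * m)) ^ 2.

Lemma F1'_P eps m M x : 0 < m -> 
  exp eps - (exp eps - 1) * (x * M + (1 - x) * m) <> 0 ->
  1 - (x * M + (1 - x) * m) <> 0 ->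
  F1' eps m M x = - (M - m) * Pc (a1 eps m M) (b1 eps m M) (c1 eps m M) (d1 eps m) x /
     ((exp eps - (exp eps - 1) * (x * M + (1 - x) * m)) * (1 - (x * M + (1 - x) * m)) ^ 2).
Proof.
  intros hm h1 h2. unfold F1', Pc, a1, b1, c1, d1. field. repeat split; auto; lra.
Qed.

Lemma div_anti c a b : 0 < c -> 0 < a -> a < b -> c / b < c / a.
Proof.
  intros. unfold Rdiv. apply Rmult_lt_compat_l; auto. apply Rinv_lt_contravar; nra.
Qed.

Lemma exp_gt1 eps : 0 < eps -> 1 < exp eps.
Proof. intro. rewrite <- exp_0. apply exp_increasing. auto. Qed.

Lemma F1'_decr eps m M y x : 0 < eps -> 0 < m < 1 -> 0 < M < 1 -> m < M -> y < x -> x <= 1 ->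
  F1' eps m M x < F1' eps m M y.
Proof.
  intros he hm hM hmM hyx hx. pose proof (exp_gt1 eps he) as HE.
  unfold F1'.
  set (E := exp eps) in *.
  assert (Hq : x * M + (1 - x) * m <= M) by nra.
  assert (HAx : 0 < E - (E - 1) * (x * M + (1 - x) * m)) by nra.
  assert (Hxy : 0 < (x - y) * (M - m)) by nra.
  assert (HAxy : E - (E - 1) * (x * M + (1 - x) * m) < E - (E - 1) * (y * M + (1 - y) * m)) by nra.
  assert (Hsx : 0 < 1 - (x * M + (1 - x) * m)) by lra.
  assert (Hsxy0 : 1 - (x * M + (1 - x) * m) < 1 - (y * M + (1 - y) * m)) by nra.
  assert (Hsxy : (1 - (x * M + (1 - x) * m))^2 < (1 - (y * M + (1 - y) * m))^2) by nra.
  assert (0 < (1 - (x * M + (1 - x) * m))^2) by nra.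
  assert (0 < (E - 1) * (M - m)) by nra.
  assert (0 < (1 - m) * (1 - M)) by nra.
  pose proof (div_anti _ _ _ H0 HAx HAxy).
  pose proof (div_anti _ _ _ H1 H Hsxy).
  lra.
Qed.

Definition F1 eps m M p :=
  ln (exp eps - (exp eps - 1) * (p * M + (1 - p) * m)) +
  (p * (M / m) + (1 - p) * ((1 - m) / (1 - (p * M + (1 - p) * m))) - 1).

Lemma F1_deriv eps m M x : 0 <= eps -> 0 < m < 1 -> 0 < M < 1 -> m <= M -> x <= 1 ->
  derivable_pt_lim (F1 eps m M) x (F1' eps m M x).
Proof.
  intros he hm hM hmM hx.
  assert (HE : 1 <= exp eps) by (rewrite <- exp_0; destruct he as [h|h]; [left; apply exp_increasing; auto| subst; lra]).
  assert (Hq : x * M + (1 - x) * m <= M) by nra.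
  assert (HA : 0 < exp eps - (exp eps - 1) * (x * M + (1 - x) * m)) by nra.
  assert (Hs : 0 < 1 - (x * M + (1 - x) * m)) by lra.
  apply is_derive_Reals. unfold F1, F1'.
  auto_derive.
  - repeat split; try lra.
  - field. repeat split; lra.
Qed.

Lemma L1_case_i eps m M : 0 < eps -> 0 < m < 1 -> 0 < M < 1 -> m < M ->
  is_max_on_01 (F1 eps m M) (clamp01 (V1 eps m M)).
Proof.
  intros he hm hM hmM. pose proof (exp_gt1 eps he) as HE.
  assert (Ha : 0 < a1 eps m M).
  { unfold a1. apply Rmult_lt_0_compat. apply Rmult_lt_0_compat. lra.
    apply Rdiv_lt_0_compat; lra. apply pow_lt; lra. }
  assert (Hkey : Pc (a1 eps m M) (b1 eps m M) (c1 eps m M) (d1 eps m) (V1 eps m M) = 0 /\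
     forall x, x < V1 eps m M -> Pc (a1 eps m M) (b1 eps m M) (c1 eps m M) (d1 eps m) x < 0).
  { unfold V1. destruct (Rlt_dec _ _) as [h|h].
    - rewrite Rplus_assoc. destruct (cardano_root _ _ h) as [g0 gp].
      apply cubic_smallest; auto.
    - apply Rnot_lt_le in h. destruct (trig_root _ _ h) as [g0 gp].
      apply cubic_smallest; auto. }
  destruct Hkey as [HV HVl].
  apply max_crit with (F' := F1' eps m M).
  - intros x Hx. apply F1_deriv; lra.
  - intros x Hx Hlt. specialize (HVl x Hlt).
    assert (Hq : x * M + (1 - x) * m <= M) by nra.
    assert (HA : 0 < exp eps - (exp eps - 1) * (x * M + (1 - x) * m)) by nra.
    assert (Hs : 0 < 1 - (x * M + (1 - x) * m)) by lra.
    rewrite F1'_P by lra.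
    apply Rdiv_lt_0_compat. nra. apply Rmult_lt_0_compat; auto. apply pow_lt; auto.
  - intros x Hx Hlt.
    set (V := V1 eps m M) in *.
    assert (Hq : V * M + (1 - V) * m <= M) by nra.
    assert (HA : 0 < exp eps - (exp eps - 1) * (V * M + (1 - V) * m)) by nra.
    assert (Hs : 0 < 1 - (V * M + (1 - V) * m)) by lra.
    assert (F1' eps m M V = 0).
    { rewrite F1'_P by lra. rewrite HV. unfold Rdiv. ring. }
    pose proof (F1'_decr eps m M V x he hm hM hmM Hlt ltac:(lra)). lra.
Qed.

Lemma L1_case_ii m M : 0 < m < 1 -> 0 < M < 1 -> m < M ->
  is_max_on_01 (F1 0 m M) (clamp01 (V1_0 m M)).
Proof.
  intros hm hM hmM.
  set (S := sqrt (M * m * (1 - m) * (1 - M))).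
  assert (HS2 : S * S = M * m * (1 - m) * (1 - M)).
  { apply sqrt_sqrt. assert (0 < M*m) by nra. assert (0 < (1-m)*(1-M)) by nra. nra. }
  assert (HS : 0 < S). { apply sqrt_lt_R0. assert (0 < M*m) by nra. assert (0 < (1-m)*(1-M)) by nra. nra. }
  assert (HF : forall x, x <= 1 -> F1' 0 m M x =
     ((M * (1 - (x * M + (1 - x) * m)))^2 - S * S) / (M * m * (1 - (x * M + (1 - x) * m))^2)).
  { intros x hx. unfold F1'. rewrite exp_0, HS2.
    assert (1 - (x * M + (1 - x) * m) <> 0) by nra. field. repeat split; lra. }
  assert (HVe : forall x, M * (1 - (x * M + (1 - x) * m)) - S = M * (M - m) * (V1_0 m M - x)).
  { intro x. unfold V1_0. fold S. field. lra. }
  assert (HMd : 0 < M * (M - m)) by nra.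
  apply max_crit with (F' := F1' 0 m M).
  - intros x Hx. apply F1_deriv; lra.
  - intros x Hx Hlt. rewrite HF by lra.
    assert (0 < M * (1 - (x * M + (1 - x) * m)) - S) by (rewrite HVe; nra).
    apply Rdiv_lt_0_compat.
    + assert ((M * (1 - (x * M + (1 - x) * m)))^2 - S * S =
              (M * (1 - (x * M + (1 - x) * m)) - S) * (M * (1 - (x * M + (1 - x) * m)) + S)) by ring.
      nra.
    + assert (0 < 1 - (x * M + (1 - x) * m)) by nra.
      assert (0 < M * m) by nra. apply Rmult_lt_0_compat; auto. apply pow_lt; auto.
  - intros x Hx Hlt. rewrite HF by lra.
    assert (M * (1 - (x * M + (1 - x) * m)) - S < 0) by (rewrite HVe; nra).
    assert (Hs : 0 < 1 - (x * M + (1 - x) * m)) by nra.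
    assert (0 < M * (1 - (x * M + (1 - x) * m))) by nra.
    assert ((M * (1 - (x * M + (1 - x) * m)))^2 - S * S =
              (M * (1 - (x * M + (1 - x) * m)) - S) * (M * (1 - (x * M + (1 - x) * m)) + S)) by ring.
    assert (0 < M * m * (1 - (x * M + (1 - x) * m))^2).
    { assert (0 < M * m) by nra. apply Rmult_lt_0_compat; auto. apply pow_lt; auto. }
    assert (Hn : (M * (1 - (x * M + (1 - x) * m)))^2 - S * S < 0) by nra.
    unfold Rdiv. assert (0 < / (M * m * (1 - (x * M + (1 - x) * m))^2)) by (apply Rinv_0_lt_compat; auto).
    set (X := (M * (1 - (x * M + (1 - x) * m)))^2 - S * S) in *. nra.
Qed.

Definition F2 eps m M p :=
  ln (exp eps - (exp eps - 1) * (p * M + (1 - p) * (((M + m) - p * M) / (2 - p)))) +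
  (p * (M / m) + (1 - p) * ((1 - ((M + m) - p * M) / (2 - p)) / (1 - M)) - 1).
Definition F2' eps m M p :=
  (M - m) / m - (M - m) / ((1 - M) * (2 - p) ^ 2)
  - (exp eps - 1) * (M - m) /
      ((2 - p) * ((exp eps - (exp eps - 1) * m) * (2 - p) - (exp eps - 1) * (M - m))).

Lemma w2_eq m M x : x <> 2 ->
  x * M + (1 - x) * (((M + m) - x * M) / (2 - x)) = m + (M - m) / (2 - x).
Proof. intro. field. lra. Qed.

Lemma F2_deriv eps m M x : 0 <= eps -> 0 < m < 1 -> 0 < M < 1 -> m <= M -> x <= 1 ->
  derivable_pt_lim (F2 eps m M) x (F2' eps m M x).
Proof.
  intros he hm hM hmM hx.
  assert (HE : 1 <= exp eps) by (rewrite <- exp_0; destruct he as [h|h]; [left; apply exp_increasing; auto| subst; lra]).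
  assert (Hd : (M - m) / (2 - x) <= M - m).
  { apply Rmult_le_reg_r with (2 - x); [lra|]. unfold Rdiv. rewrite Rmult_assoc, Rinv_l by lra. nra. }
  assert (Hd0 : 0 <= (M - m) / (2 - x)) by (apply Rdiv_le_0_compat; lra).
  assert (HA : 0 < exp eps - (exp eps - 1) * (x * M + (1 - x) * (((M + m) - x * M) / (2 - x)))).
  { rewrite w2_eq by lra. nra. }
  assert (Hal : 1 <= exp eps - (exp eps - 1) * m) by nra.
  assert (Hal2 : exp eps - (exp eps - 1) * m <= (exp eps - (exp eps - 1) * m) * (2 - x)) by nra.
  assert (HB : 0 < (exp eps - (exp eps - 1) * m) * (2 - x) - (exp eps - 1) * (M - m)) by nra.
  apply is_derive_Reals. unfold F2, F2'.
  auto_derive.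
  - repeat split; try lra.
    - apply HA.
    - field. repeat split; lra.
Qed.

Lemma P2_id eps m M x : 0 < m -> M < 1 ->
  Pc (a2 eps m) (b2 eps m M) (c2 eps m M) (d2 eps m M) x =
  - ((2 - x) ^ 2 * ((exp eps - (exp eps - 1) * m) * (2 - x) - (exp eps - 1) * (M - m)) / m
     - ((exp eps - (exp eps - 1) * m) * (2 - x) - (exp eps - 1) * (M - m)) / (1 - M)
     - (exp eps - 1) * (2 - x)).
Proof. intros. unfold Pc, a2, b2, c2, d2. field. lra. Qed.

Lemma F2'_P eps m M x : 0 < m -> M < 1 -> x <> 2 ->
  (exp eps - (exp eps - 1) * m) * (2 - x) - (exp eps - 1) * (M - m) <> 0 ->
  F2' eps m M x = - (M - m) * Pc (a2 eps m) (b2 eps m M) (c2 eps m M) (d2 eps m M) x /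
     ((2 - x) ^ 2 * ((exp eps - (exp eps - 1) * m) * (2 - x) - (exp eps - 1) * (M - m))).
Proof.
  intros. rewrite P2_id by auto. unfold F2'. field. repeat split; lra.
Qed.

Lemma F2'_decr eps m M y x : 0 <= eps -> 0 < m < 1 -> 0 < M < 1 -> m < M -> y < x -> x <= 1 ->
  F2' eps m M x < F2' eps m M y.
Proof.
  intros he hm hM hmM hyx hx.
  assert (HE : 1 <= exp eps) by (rewrite <- exp_0; destruct he as [h|h]; [left; apply exp_increasing; auto| subst; lra]).
  unfold F2'.
  set (E := exp eps) in *.
  set (al := E - (E - 1) * m).
  assert (Hal : 1 <= al) by (unfold al; nra).
  assert (Hx2 : 1 <= 2 - x) by lra.
  assert (Hxy : 2 - x < 2 - y) by lra.
  assert (H1 : (1 - M) * (2 - x) ^ 2 < (1 - M) * (2 - y) ^ 2).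
  { apply Rmult_lt_compat_l; [lra|]. simpl. nra. }
  assert (H1' : 0 < (1 - M) * (2 - x) ^ 2) by (apply Rmult_lt_0_compat; [lra| apply pow_lt; lra]).
  pose proof (div_anti (M - m) _ _ ltac:(lra) H1' H1).
  assert (Hal1 : al <= al * (2 - x)) by nra.
  assert (Hal0 : 0 < al - (E - 1) * (M - m)) by (unfold al; nra).
  assert (HBx : 0 < al * (2 - x) - (E - 1) * (M - m)) by lra.
  assert (HBxy : al * (2 - x) - (E - 1) * (M - m) < al * (2 - y) - (E - 1) * (M - m)) by nra.
  assert (H2 : (2 - x) * (al * (2 - x) - (E - 1) * (M - m)) < (2 - y) * (al * (2 - y) - (E - 1) * (M - m))) by nra.
  assert (H2' : 0 < (2 - x) * (al * (2 - x) - (E - 1) * (M - m))) by nra.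
  destruct (Req_dec E 1) as [e|ne].
  - rewrite e. replace ((1 - 1) * (M - m)) with 0 by ring. unfold Rdiv. rewrite !Rmult_0_l. lra.
  - assert (0 < (E - 1) * (M - m)) by nra.
    pose proof (div_anti _ _ _ H0 H2' H2). lra.
Qed.

Lemma L2_case_i eps m M : 0 < eps -> 0 < m < 1 -> 0 < M < 1 -> m < M ->
  is_max_on_01 (F2 eps m M) (clamp01 (V2 eps m M)).
Proof.
  intros he hm hM hmM. pose proof (exp_gt1 eps he) as HE.
  assert (Hal : 1 <= exp eps - (exp eps - 1) * m) by nra.
  assert (Ha : 0 < a2 eps m).
  { unfold a2. apply Rdiv_lt_0_compat; lra. }
  set (al := exp eps - (exp eps - 1) * m) in *.
  set (be := (exp eps - 1) * (M - m)).
  assert (Hbe : 0 < be) by (unfold be; nra).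
  assert (Hbea : be < al) by (unfold be, al; nra).
  assert (Hdisc : D21 eps m M ^ 2 - 4 * D20 eps m M ^ 3 <= 0).
  { left. apply (cubic_disc_neg (a2 eps m) (b2 eps m M) (c2 eps m M) (d2 eps m M) (2 - be / al) 2); auto.
    - assert (0 < be / al) by (apply Rdiv_lt_0_compat; lra). lra.
    - rewrite P2_id by lra. fold al be.
      replace (2 - (2 - be / al)) with (be / al) by ring.
      replace (al * (be / al) - be) with 0 by (field; lra).
      assert (0 < (exp eps - 1) * (be / al)) by (apply Rmult_lt_0_compat; [lra| apply Rdiv_lt_0_compat; lra]).
      unfold Rdiv at 1 2. lra.
    - rewrite P2_id by lra. fold al be.
      replace (2 - 2) with 0 by ring.
      assert (0 < be / (1 - M)) by (apply Rdiv_lt_0_compat; lra).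
      replace (al * 0 - be) with (- be) by ring.
      replace (0 ^ 2 * - be / m) with 0 by (unfold Rdiv; ring).
      replace (- be / (1 - M)) with (- (be / (1 - M))) by (unfold Rdiv; ring).
      lra. }
  assert (Hkey : Pc (a2 eps m) (b2 eps m M) (c2 eps m M) (d2 eps m M) (V2 eps m M) = 0 /\
     forall x, x < V2 eps m M -> Pc (a2 eps m) (b2 eps m M) (c2 eps m M) (d2 eps m M) x < 0).
  { unfold V2. destruct (trig_root _ _ Hdisc) as [g0 gp].
    apply cubic_smallest; auto. }
  destruct Hkey as [HV HVl].
  apply max_crit with (F' := F2' eps m M).
  - intros x Hx. apply F2_deriv; lra.
  - intros x Hx Hlt. specialize (HVl x Hlt).
    assert (HB : 0 < al * (2 - x) - be) by nra.
    rewrite F2'_P by (fold al be; lra).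
    fold al be.
    apply Rdiv_lt_0_compat. nra. apply Rmult_lt_0_compat; auto. apply pow_lt; lra.
  - intros x Hx Hlt.
    set (V := V2 eps m M) in *.
    assert (HB : 0 < al * (2 - V) - be) by nra.
    assert (F2' eps m M V = 0).
    { rewrite F2'_P by (fold al be; lra). rewrite HV. unfold Rdiv. ring. }
    pose proof (F2'_decr eps m M V x ltac:(lra) hm hM hmM Hlt ltac:(lra)). lra.
Qed.

Lemma L2_case_ii m M : 0 < m < 1 -> 0 < M < 1 -> m < M ->
  is_max_on_01 (F2 0 m M) (clamp01 (V2_0 m M)).
Proof.
  intros hm hM hmM.
  set (S := sqrt (m * (1 - M))).
  assert (HS2 : S * S = m * (1 - M)) by (apply sqrt_sqrt; nra).
  assert (HS : 0 < S) by (apply sqrt_lt_R0; nra).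
  assert (HF : forall x, x <= 1 -> F2' 0 m M x =
     (M - m) * (((1 - M) * (2 - x))^2 - S * S) / (m * (1 - M) ^ 2 * (2 - x) ^ 2)).
  { intros x hx. unfold F2'. rewrite exp_0, HS2. field. repeat split; try lra. }
  assert (HVe : forall x, (1 - M) * (2 - x) - S = (1 - M) * (V2_0 m M - x)).
  { intro x. unfold V2_0. fold S. field. lra. }
  apply max_crit with (F' := F2' 0 m M).
  - intros x Hx. apply F2_deriv; lra.
  - intros x Hx Hlt. rewrite HF by lra.
    assert (0 < (1 - M) * (2 - x) - S) by (rewrite HVe; nra).
    assert (Hn : 0 < ((1 - M) * (2 - x))^2 - S * S) by nra.
    apply Rdiv_lt_0_compat. nra.
    assert (0 < m * (1 - M) ^ 2) by (apply Rmult_lt_0_compat; [lra| apply pow_lt; lra]).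
    apply Rmult_lt_0_compat; auto. apply pow_lt; lra.
  - intros x Hx Hlt. rewrite HF by lra.
    assert ((1 - M) * (2 - x) - S < 0) by (rewrite HVe; nra).
    assert (0 < (1 - M) * (2 - x)) by nra.
    assert (Hn : ((1 - M) * (2 - x))^2 - S * S < 0) by nra.
    assert (0 < m * (1 - M) ^ 2 * (2 - x) ^ 2).
    { apply Rmult_lt_0_compat; [apply Rmult_lt_0_compat; [lra| apply pow_lt; lra]| apply pow_lt; lra]. }
    unfold Rdiv. assert (0 < / (m * (1 - M) ^ 2 * (2 - x) ^ 2)) by (apply Rinv_0_lt_compat; auto).
    set (X := ((1 - M) * (2 - x))^2 - S * S) in *.
    assert ((M - m) * X < 0) by nra. nra.
Qed.

Lemma L1_exp eps m M x : 0 <= eps -> 0 < m < 1 -> 0 < M < 1 -> m <= M -> 0 <= x <= 1 ->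
  L1 eps m M x = exp (F1 eps m M x).
Proof.
  intros he hm hM hmM hx.
  assert (HE : 1 <= exp eps) by (rewrite <- exp_0; destruct he as [h|h]; [left; apply exp_increasing; auto| subst; lra]).
  assert (Hq : x * M + (1 - x) * m <= M) by nra.
  assert (HA : 0 < exp eps - (exp eps - 1) * (x * M + (1 - x) * m)) by nra.
  unfold L1, F1. cbv zeta. rewrite exp_plus, exp_ln by auto. reflexivity.
Qed.

Lemma L2_exp eps m M x : 0 <= eps -> 0 < m < 1 -> 0 < M < 1 -> m <= M -> 0 <= x <= 1 ->
  L2 eps m M x = exp (F2 eps m M x).
Proof.
  intros he hm hM hmM hx.
  assert (HE : 1 <= exp eps) by (rewrite <- exp_0; destruct he as [h|h]; [left; apply exp_increasing; auto| subst; lra]).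
  assert (Hd : (M - m) / (2 - x) <= M - m).
  { apply Rmult_le_reg_r with (2 - x); [lra|]. unfold Rdiv. rewrite Rmult_assoc, Rinv_l by lra. nra. }
  assert (Hd0 : 0 <= (M - m) / (2 - x)) by (apply Rdiv_le_0_compat; lra).
  assert (HA : 0 < exp eps - (exp eps - 1) * (x * M + (1 - x) * (((M + m) - x * M) / (2 - x)))).
  { rewrite w2_eq by lra. nra. }
  unfold L2, F2. cbv zeta. rewrite exp_plus, exp_ln by auto. reflexivity.
Qed.

Lemma max_pair (L l F : R -> R) p :
  is_max_on_01 F p ->
  (forall x, 0 <= x <= 1 -> L x = exp (F x)) ->
  (forall x, 0 <= x <= 1 -> l x = ln (L x)) ->
  is_max_on_01 L p /\ is_max_on_01 l p.
Proof.
  intros H HL Hl. split.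
  - apply max_transfer_exp with F; auto.
  - apply max_transfer with F; auto. intros x Hx. rewrite Hl, HL by auto. apply ln_exp.
Qed.

Theorem proposition6 (eps m M : R)
  (heps : 0 <= eps) (hm : 0 < m < 1) (hM : 0 < M < 1) (hmM : m <= M) :
  (eps <> 0 -> m <> M ->
     is_max_on_01 (L1 eps m M) (clamp01 (V1 eps m M)) /\
     is_max_on_01 (l1 eps m M) (clamp01 (V1 eps m M)) /\
     is_max_on_01 (L2 eps m M) (clamp01 (V2 eps m M)) /\
     is_max_on_01 (l2 eps m M) (clamp01 (V2 eps m M))) /\
  (eps = 0 -> m <> M ->
     is_max_on_01 (L1 eps m M) (clamp01 (V1_0 m M)) /\
     is_max_on_01 (l1 eps m M) (clamp01 (V1_0 m M)) /\
     is_max_on_01 (L2 eps m M) (clamp01 (V2_0 m M)) /\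
     is_max_on_01 (l2 eps m M) (clamp01 (V2_0 m M))) /\
  (m = M ->
     forall p, 0 <= p <= 1 ->
       L1 eps m M p = exp eps - (exp eps - 1) * m /\
       L2 eps m M p = exp eps - (exp eps - 1) * m).
Proof.
  split; [|split].
  - intros he hne.
    assert (he' : 0 < eps) by lra. assert (hlt : m < M) by lra.
    destruct (max_pair (L1 eps m M) (l1 eps m M) (F1 eps m M) _ (L1_case_i eps m M he' hm hM hlt))
      as [A1 A2].
    { intros; apply L1_exp; auto. } { intros; reflexivity. }
    destruct (max_pair (L2 eps m M) (l2 eps m M) (F2 eps m M) _ (L2_case_i eps m M he' hm hM hlt))
      as [B1 B2].
    { intros; apply L2_exp; auto. } { intros; reflexivity. }
    auto.
  - intros he hne. subst eps. assert (hlt : m < M) by lra.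
    destruct (max_pair (L1 0 m M) (l1 0 m M) (F1 0 m M) _ (L1_case_ii m M hm hM hlt))
      as [A1 A2].
    { intros; apply L1_exp; auto; lra. } { intros; reflexivity. }
    destruct (max_pair (L2 0 m M) (l2 0 m M) (F2 0 m M) _ (L2_case_ii m M hm hM hlt))
      as [B1 B2].
    { intros; apply L2_exp; auto; lra. } { intros; reflexivity. }
    auto.
  - intros e p hp. subst M. unfold L1, L2. cbv zeta. split.
    + replace (p * (m / m) + (1 - p) * ((1 - m) / (1 - (p * m + (1 - p) * m))) - 1) with 0
        by (field; split; lra).
      replace (p * m + (1 - p) * m) with m by ring. rewrite exp_0. ring.
    + replace ((m + m - p * m) / (2 - p)) with m by (field; lra).
      replace (p * (m / m) + (1 - p) * ((1 - m) / (1 - m)) - 1) with 0 by (field; lra).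
      replace (p * m + (1 - p) * m) with m by ring. rewrite exp_0. ring.
Qed.
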